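(* Let $(\mathbb{T}_n)$ be the sequence of dyadic partitions. (a) If $\bm f\in\mathscr{F}$, then $x_{\bm f}$ admits the continuous quadratic variation $\langle x_{\bm f}\rangle_t=\int_0^tf_\infty^2(s)\,ds$ for all $t\in[0,1]$. (b) If $\bm f,\bm g\in\mathscr{F}$, then $x_{\bm f}$ and $x_{\bm g}$ admit the continuous covariation $\langle x_{\bm f},x_{\bm g}\rangle_t=\int_0^tf_\infty(s)g_\infty(s)\,ds$ for all $t\in[0,1]$. In particular, $\{x_{\bm f}:\bm f\in\mathscr{F}\}$ is a vector space of functions admitting a continuous quadratic variation.
   Context: Dyadic partitions: $\mathbb{T}_n=\{k2^{-n}:k=0,\dots,2^n\}$. For $s\in\mathbb{T}_n$, $s'$ is the successor of $s$ in $\mathbb{T}_n$ ($s'=1$ if $s=1$). For $x,y\in C[0,1]$, $\langle x,y\rangle^n_t:=\sum_{s\in\mathbb{T}_n,\,s\le t}(x(s')-x(s))(y(s')-y(s))$, $\langle x\rangle^n_t:=\langle x,x\rangle^n_t$; the quadratic variation is $\langle x\rangle_t=\lim_n\langle x\rangle^n_t$ and the covariation is $\langle x,y\rangle_t=\lim_n\langle x,y\rangle^n_t$, whenever these limits exist. Faber--Schauder functions: $e_{0,0}(t)=\max\{0,\min\{t,1-t\}\}$, $e_{n,k}(t)=2^{-n/2}e_{0,0}(2^nt-k)$ for $n\ge1$, $k=0,\dots,2^n-1$. $\mathscr{F}$ is the class of sequences $\bm f=(f_n)_{n\ge0}$ of bounded functions $f_n:[0,1]\to\mathbb{R}$ converging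 uniformly to a Riemann integrable function $f_\infty$. For $\bm f\in\mathscr{F}$, $\theta_{n,k}(\bm f):=f_n(k2^{-n})$ and $x_{\bm f}:=\sum_{n=0}^\infty\sum_{k=0}^{2^n-1}\theta_{n,k}(\bm f)e_{n,k}$ (an absolutely convergent series defining a continuous function). *)

(* Defs.v *)
From Stdlib Require Import Reals.
From Coquelicot Require Import Coquelicot.
Open Scope R_scope.

Fixpoint sumk (F : nat -> R) (m : nat) : R :=
  match m with
  | O => 0
  | S m' => sumk F m' + F m'
  end.

Definition dyad (n k : nat) : R := INR k / 2 ^ n.

Definition e00 (t : R) : R := Rmax 0 (Rmin t (1 - t)).
Definition schauder (n k : nat) (t : R) : R :=
  / sqrt (2 ^ n) * e00 (2 ^ n * t - INR k).

Definition inF (f : nat -> R -> R) (finf : R -> R) : Prop :=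
  (forall n, exists M, forall t, 0 <= t <= 1 -> Rabs (f n t) <= M) /\
  (forall eps, 0 < eps -> exists N, forall n t, (N <= n)%nat -> 0 <= t <= 1 ->
       Rabs (f n t - finf t) < eps) /\
  ex_RInt finf 0 1.

Definition theta (f : nat -> R -> R) (n k : nat) : R := f n (dyad n k).

Definition xf (f : nat -> R -> R) (t : R) : R :=
  Series (fun n => sumk (fun k => theta f n k * schauder n k t) (2 ^ n)%nat).

(* <x,y>^n_t = sum_{s in T_n, s <= t} (x(s')-x(s))(y(s')-y(s));
   the term s = 1 has s' = 1 and contributes 0, so k ranges over 0..2^n-1 *)
Definition covar_n (x y : R -> R) (n : nat) (t : R) : R :=
  sumk (fun k => if Rle_dec (dyad n k) t
                 then (x (dyad n (S k)) - x (dyad n k)) * (y (dyad n (S k)) - y (dyad n k))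
                 else 0) (2 ^ n)%nat.

Definition qv_n (x : R -> R) (n : nat) (t : R) : R := covar_n x x n t.

Definition cont01 (F : R -> R) : Prop :=
  forall t, 0 <= t <= 1 ->
    filterlim F (within (fun u => 0 <= u <= 1) (locally t)) (locally (F t)).

(* Main.v *)
Require Import Defs.
From Stdlib Require Import Reals.
From Coquelicot Require Import Coquelicot.
From Stdlib Require Import Lra Lia Psatz Arith List FunctionalExtensionality.
Open Scope R_scope.

Lemma sumk_ext F G n : (forall k, (k < n)%nat -> F k = G k) -> sumk F n = sumk G n.
Proof. induction n; simpl; intros H; auto. rewrite IHn by (intros; apply H; lia). rewrite H by lia. auto. Qed.

Lemma sumk_plus F G n : sumk (fun k => F k + G k) n = sumk F n + sumk G n.
Proof. induction n; simpl; [lra|]. rewrite IHn. lra. Qed.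

Lemma sumk_scal c F n : sumk (fun k => c * F k) n = c * sumk F n.
Proof. induction n; simpl; [lra|]. rewrite IHn. lra. Qed.

Lemma sumk_zero n : sumk (fun _ => 0) n = 0.
Proof. induction n; simpl; [lra|]. rewrite IHn. lra. Qed.

Lemma sumk_abs_le F G n : (forall k, (k < n)%nat -> Rabs (F k) <= G k) -> Rabs (sumk F n) <= sumk G n.
Proof. induction n; simpl; intros H. rewrite Rabs_R0; lra.
  eapply Rle_trans. apply Rabs_triang. apply Rplus_le_compat. apply IHn; intros; apply H; lia. apply H; lia. Qed.

Lemma sumk_const_le F B n : (forall k, (k < n)%nat -> Rabs (F k) <= B) -> Rabs (sumk F n) <= INR n * B.
Proof. intros H. eapply Rle_trans. apply sumk_abs_le with (G := fun _ => B); auto.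
  clear H. induction n; simpl sumk. rewrite (S_INR n) || idtac; simpl; lra.
  rewrite S_INR. lra. Qed.

Lemma sumk_S F n : sumk F (S n) = sumk F n + F n.
Proof. reflexivity. Qed.

Lemma sumk_pair F n : sumk F (2 * n)%nat = sumk (fun k => F (2 * k)%nat + F (S (2 * k))) n.
Proof. induction n. simpl; auto.
  replace (2 * S n)%nat with (S (S (2 * n))) by lia. rewrite !sumk_S. rewrite IHn. lra. Qed.

Lemma sumk_spike F n k : (k < n)%nat -> (forall j, (j < n)%nat -> j <> k -> F j = 0) -> sumk F n = F k.
Proof. induction n; intros Hk H. lia. simpl.
  destruct (Nat.eq_dec k n). subst. rewrite (sumk_ext F (fun _ => 0)). rewrite sumk_zero; lra.
  intros; apply H; lia.
  rewrite IHn; try lia. rewrite (H n); try lia. lra. intros; apply H; lia. Qed.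

Lemma sumk_local F B y N : 0 <= B ->
  (forall k, (k < N)%nat -> 0 <= F k <= B) ->
  (forall k, (k < N)%nat -> (y < INR k \/ INR k + 1 <= y) -> F k = 0) ->
  sumk F N <= B /\ (INR N <= y -> sumk F N = 0).
Proof. intros HB. induction N; intros H1 H2. simpl; split; intros; lra.
  destruct IHN as [IH1 IH2]. intros; apply H1; lia. intros k Hk Hd; apply H2; [lia|exact Hd].
  simpl sumk. rewrite S_INR.
  destruct (Rlt_le_dec y (INR N)).
  - rewrite (H2 N) by (try lia; lra). split; lra.
  - rewrite IH2 by lra. split. specialize (H1 N ltac:(lia)). lra.
    intros. rewrite (H2 N) by (try lia; lra). lra. Qed.

Lemma sumk_minus F G n : sumk (fun k => F k - G k) n = sumk F n - sumk G n.
Proof. induction n; simpl; [lra|]. rewrite IHn. lra. Qed.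


Lemma bound_below f : (forall n, exists M, forall t, 0 <= t <= 1 -> Rabs (f n t) <= M) ->
  forall N, exists M, forall n t, (n < N)%nat -> 0 <= t <= 1 -> Rabs (f n t) <= M.
Proof. intros H N. induction N. exists 0. intros; lia.
  destruct IHN as [M1 H1]. destruct (H N) as [M2 H2]. exists (Rmax M1 M2).
  intros n t Hn Ht. destruct (Nat.eq_dec n N). subst. eapply Rle_trans. apply H2; auto. apply Rmax_r.
  eapply Rle_trans. apply H1; auto; lia. apply Rmax_l. Qed.

Lemma inF_bound f finf : inF f finf -> exists M, 0 <= M /\
  (forall n t, 0 <= t <= 1 -> Rabs (f n t) <= M) /\ (forall t, 0 <= t <= 1 -> Rabs (finf t) <= M).
Proof. intros [Hb [Hu _]]. destruct (Hu 1 ltac:(lra)) as [N HN].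
  destruct (Hb N) as [MN HMN]. destruct (bound_below f Hb N) as [M1 HM1].
  assert (Hfi : forall t, 0 <= t <= 1 -> Rabs (finf t) <= MN + 1).
  { intros t Ht. specialize (HN N t (le_n _) Ht). specialize (HMN t Ht).
    assert (Rabs (finf t) <= Rabs (f N t) + Rabs (f N t - finf t)).
    { replace (finf t) with (f N t - (f N t - finf t)) at 1 by ring. apply Rabs_triang_inv2 || idtac.
      eapply Rle_trans. apply Rabs_triang. rewrite Rabs_Ropp. lra. }
    lra. }
  exists (Rmax 0 (Rmax M1 (MN + 2))). split. apply Rmax_l. split.
  - intros n t Ht. destruct (le_lt_dec N n).
    + assert (Rabs (f n t) <= MN + 2).
      { specialize (HN n t l Ht). specialize (Hfi t Ht).
        replace (f n t) with ((f n t - finf t) + finf t) by ring.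
        eapply Rle_trans. apply Rabs_triang. lra. }
      eapply Rle_trans; [eauto|]. eapply Rle_trans; [|apply Rmax_r]. apply Rmax_r.
    + eapply Rle_trans. apply HM1; eauto. eapply Rle_trans; [|apply Rmax_r]. apply Rmax_l.
  - intros t Ht. eapply Rle_trans. apply Hfi; auto. eapply Rle_trans; [|apply Rmax_r].
    eapply Rle_trans; [|apply Rmax_r]. lra. Qed.

Lemma pow2_pos n : 0 < 2 ^ n.
Proof. apply pow_lt. lra. Qed.

Lemma INR_pow2 n : INR (2 ^ n)%nat = 2 ^ n.
Proof. rewrite pow_INR. replace (INR 2) with 2 by (simpl; ring). reflexivity. Qed.

Lemma dyad_in01 n k : (k <= 2 ^ n)%nat -> 0 <= dyad n k <= 1.
Proof. intros H. unfold dyad. pose proof (pow2_pos n). apply le_INR in H. rewrite INR_pow2 in H.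
  pose proof (pos_INR k). split. apply Rmult_le_pos; auto. left; apply Rinv_0_lt_compat; auto.
  apply Rmult_le_reg_r with (2 ^ n); auto. field_simplify; lra. Qed.

Lemma dyad_double m k : dyad (S m) (2 * k) = dyad m k.
Proof. unfold dyad. rewrite mult_INR. simpl. field. pose proof (pow2_pos m). lra. Qed.

Lemma e00_nonneg t : 0 <= e00 t.
Proof. unfold e00. apply Rmax_l. Qed.

Lemma e00_le t : e00 t <= / 2.
Proof. unfold e00, Rmax, Rmin. repeat destruct Rle_dec; lra. Qed.

Lemma e00_out t : (t <= 0 \/ 1 <= t) -> e00 t = 0.
Proof. unfold e00, Rmax, Rmin. intros. repeat destruct Rle_dec; lra. Qed.

Lemma e00_nat a b : e00 (INR a - INR b) = 0.
Proof. apply e00_out. destruct (le_lt_dec a b) as [H|H].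
  left. apply le_INR in H. lra. right. apply le_INR in H. rewrite S_INR in H. lra. Qed.

Lemma e00_mid A h : 0 < h -> (0 <= A \/ A + h <= 0) -> (/2 <= A \/ A + h <= /2) ->
  (1 <= A \/ A + h <= 1) -> e00 (A + h / 2) = (e00 A + e00 (A + h)) / 2.
Proof. intros. unfold e00, Rmax, Rmin. repeat destruct Rle_dec; lra. Qed.

Lemma e00_half a b : e00 (INR a - INR b + / 2) = if Nat.eq_dec a b then / 2 else 0.
Proof. destruct (Nat.eq_dec a b). subst. replace (INR b - INR b + /2) with (/2) by ring.
  unfold e00, Rmax, Rmin. repeat destruct Rle_dec; lra.
  apply e00_out. destruct (le_lt_dec a b) as [H|H].
  left. assert (a < b)%nat by lia. apply lt_INR in H0. 
  assert (INR (S a) <= INR b) by (apply le_INR; lia). rewrite S_INR in H1. lra.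
  right. apply le_INR in H. rewrite S_INR in H. lra. Qed.

Lemma e00_dyad_zero n m i j : (m <= n)%nat -> e00 (2 ^ n * dyad m i - INR j) = 0.
Proof. intros H. replace n with (m + (n - m))%nat by lia.
  replace (2 ^ (m + (n - m)) * dyad m i) with (INR (i * 2 ^ (n - m))%nat).
  apply e00_nat. rewrite mult_INR, INR_pow2, pow_add. unfold dyad. field. pose proof (pow2_pos m); lra. Qed.


Definition Sn (f : nat -> R -> R) n t := sumk (fun k => theta f n k * schauder n k t) (2 ^ n)%nat.

Lemma xf_Sn f t : xf f t = Series (fun n => Sn f n t).
Proof. reflexivity. Qed.

Lemma sqrt2_facts : sqrt 2 * sqrt 2 = 2 /\ 1 < sqrt 2 /\ sqrt 2 <= 3/2.
Proof. pose proof (sqrt_sqrt 2 ltac:(lra)). pose proof (sqrt_lt_R0 2 ltac:(lra)). split; auto. split; nra. Qed.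

Lemma sqrt_pow2 n : sqrt (2 ^ n) = sqrt 2 ^ n.
Proof. induction n. simpl. apply sqrt_1. simpl. rewrite sqrt_mult_alt by lra. rewrite IHn. ring. Qed.

Lemma sqrt_pow2_pos n : 0 < sqrt (2 ^ n).
Proof. apply sqrt_lt_R0, pow2_pos. Qed.

Lemma sqrt_pow2_sq n : sqrt (2 ^ n) * sqrt (2 ^ n) = 2 ^ n.
Proof. apply sqrt_sqrt. left; apply pow2_pos. Qed.

Lemma theta_bound f M n k : (forall n t, 0 <= t <= 1 -> Rabs (f n t) <= M) -> (k < 2 ^ n)%nat ->
  Rabs (theta f n k) <= M.
Proof. intros H Hk. apply H. apply dyad_in01. lia. Qed.

Lemma Sn_bound f M n t : (forall n t, 0 <= t <= 1 -> Rabs (f n t) <= M) ->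
  Rabs (Sn f n t) <= M * / sqrt (2 ^ n) * / 2.
Proof. intros H. assert (HM : 0 <= M). { specialize (H 0%nat 0 ltac:(lra)). pose proof (Rabs_pos (f 0%nat 0)). lra. }
  pose proof (sqrt_pow2_pos n) as Hs.
  unfold Sn. eapply Rle_trans. apply sumk_abs_le with (G := fun k => (M * / sqrt (2 ^ n)) * e00 (2 ^ n * t - INR k)).
  - intros k Hk. unfold schauder. rewrite Rabs_mult, Rabs_mult. rewrite (Rabs_pos_eq (e00 _)) by apply e00_nonneg.
    rewrite (Rabs_pos_eq (/ _)) by (left; apply Rinv_0_lt_compat; auto).
    rewrite <- Rmult_assoc. apply Rmult_le_compat_r. apply e00_nonneg. apply Rmult_le_compat_r.
    left; apply Rinv_0_lt_compat; auto. apply theta_bound; auto.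
  - rewrite sumk_scal. apply Rmult_le_compat_l. apply Rmult_le_pos; auto. left; apply Rinv_0_lt_compat; auto.
    apply (sumk_local _ (/2) (2 ^ n * t)). lra. intros; split. apply e00_nonneg. apply e00_le.
    intros k _ Hk. apply e00_out. lra. Qed.

Lemma Sn_ex_series f M t : (forall n t, 0 <= t <= 1 -> Rabs (f n t) <= M) -> ex_series (fun n => Sn f n t).
Proof. intros H. destruct sqrt2_facts as [H1 [H2 H3]].
  apply (@ex_series_le R_AbsRing R_CompleteNormedModule) with (b := fun n => M * / 2 * (/ sqrt 2) ^ n).
  - intros n. change (norm (Sn f n t)) with (Rabs (Sn f n t)). eapply Rle_trans. apply Sn_bound; eauto.
    rewrite pow_inv, <- sqrt_pow2. lra.
  - apply (@ex_series_scal_l R_AbsRing R_NormedModule (M * / 2) (fun n => (/ sqrt 2) ^ n)). apply ex_series_geom. rewrite Rabs_pos_eq.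
    apply Rmult_lt_reg_r with (sqrt 2). lra. rewrite Rinv_l by lra. lra.
    left; apply Rinv_0_lt_compat; lra. Qed.


Lemma sumk_mid F G H n : sumk F n - (sumk G n + sumk H n) / 2 = sumk (fun j => F j - (G j + H j) / 2) n.
Proof. induction n; simpl; [lra|]. rewrite <- IHn. lra. Qed.

Lemma cond_tr K J Q c : 0 < Q -> (c * Q + J * Q <= K \/ K + 1 <= c * Q + J * Q) ->
  (c <= K / Q - J \/ K / Q - J + / Q <= c).
Proof. intros HQ H. assert (E : (K / Q - J) * Q = K - J * Q) by (field; lra).
  assert (E2 : / Q * Q = 1) by (field; lra).
  destruct H; [left|right]; nra. Qed.

Lemma nat_cond_R (k j q c : nat) : ((c + j * q <= k)%nat \/ (k + 1 <= c + j * q)%nat) ->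
  (INR c + INR j * INR q <= INR k \/ INR k + 1 <= INR c + INR j * INR q).
Proof. intros [H|H]; apply le_INR in H; rewrite ?plus_INR, ?mult_INR in H; simpl in H; [left|right]; lra. Qed.

Lemma level_lt n m k j : (n < m)%nat ->
  e00 (2 ^ n * dyad (S m) (S (2 * k)) - INR j) -
  (e00 (2 ^ n * dyad m k - INR j) + e00 (2 ^ n * dyad m (S k) - INR j)) / 2 = 0.
Proof. intros Hnm. destruct (m - n)%nat as [|p0] eqn:Ep. lia.
  replace m with (n + S p0)%nat by lia. set (p := S p0).
  set (q := (2 ^ p)%nat). set (r := (2 ^ p0)%nat).
  assert (Hq : INR q = 2 ^ p) by apply INR_pow2.
  assert (Hqr : (q = 2 * r)%nat) by (unfold q, r, p; simpl; lia).
  assert (HQ : 0 < INR q) by (rewrite Hq; apply pow2_pos).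
  pose proof (pow2_pos n). pose proof (pow2_pos p).
  set (A := INR k / INR q - INR j).
  assert (Ea : 2 ^ n * dyad (n + p) k - INR j = A).
  { unfold A, dyad. rewrite pow_add, Hq. field. lra. }
  assert (Eb : 2 ^ n * dyad (n + p) (S k) - INR j = A + / INR q).
  { unfold A, dyad. rewrite pow_add, Hq, S_INR. field. lra. }
  assert (Ec : 2 ^ n * dyad (S (n + p)) (S (2 * k)) - INR j = A + / INR q / 2).
  { unfold A, dyad. rewrite S_INR, mult_INR. simpl pow. rewrite pow_add, Hq. simpl INR. field. lra. }
  rewrite Ea, Eb, Ec. rewrite e00_mid. lra.
  - apply Rinv_0_lt_compat; auto.
  - destruct (cond_tr (INR k) (INR j) (INR q) 0 HQ); [|left; unfold A; lra|right; unfold A; lra].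
    pose proof (nat_cond_R k j q 0 ltac:(lia)). simpl INR in H1. lra.
  - destruct (cond_tr (INR k) (INR j) (INR q) (/2) HQ); [|left; unfold A; lra|right; unfold A; lra].
    pose proof (nat_cond_R k j q r ltac:(lia)). rewrite Hqr, mult_INR in *. simpl INR in *. lra.
  - destruct (cond_tr (INR k) (INR j) (INR q) 1 HQ); [|left; unfold A; lra|right; unfold A; lra].
    pose proof (nat_cond_R k j q q ltac:(lia)). lra.
Qed.

Lemma level_diff f n m k : (k < 2 ^ m)%nat ->
  Sn f n (dyad (S m) (S (2 * k))) - (Sn f n (dyad m k) + Sn f n (dyad m (S k))) / 2 =
  if Nat.eq_dec n m then theta f m k * / (2 * sqrt (2 ^ m)) else 0.
Proof. intros Hk. unfold Sn. rewrite sumk_mid. unfold schauder.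
  pose proof (sqrt_pow2_pos n) as Hs.
  destruct (Nat.eq_dec n m) as [->|Hnm].
  - rewrite (sumk_spike _ _ k); auto.
    + rewrite (e00_dyad_zero m m k) by lia. rewrite (e00_dyad_zero m m (S k)) by lia.
      replace (2 ^ m * dyad (S m) (S (2 * k)) - INR k) with (INR k - INR k + / 2).
      rewrite e00_half. destruct Nat.eq_dec; [|congruence]. field. lra.
      unfold dyad. rewrite S_INR, mult_INR. simpl pow. simpl INR. field. pose proof (pow2_pos m). lra.
    + intros j Hj Hjk. rewrite (e00_dyad_zero m m k) by lia. rewrite (e00_dyad_zero m m (S k)) by lia.
      replace (2 ^ m * dyad (S m) (S (2 * k)) - INR j) with (INR k - INR j + / 2).
      rewrite e00_half. destruct Nat.eq_dec; [congruence|]. unfold Rdiv; ring.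
      unfold dyad. rewrite S_INR, mult_INR. simpl pow. simpl INR. field. pose proof (pow2_pos m). lra.
  - rewrite <- (sumk_zero (2 ^ n)). apply sumk_ext. intros j Hj.
    destruct (le_lt_dec m n).
    + rewrite <- (dyad_double m k). replace (dyad m (S k)) with (dyad (S m) (2 * S k)) by apply dyad_double.
      rewrite !(e00_dyad_zero n (S m)) by lia. unfold Rdiv; ring.
    + pose proof (level_lt n m k j l). 
      transitivity (theta f n j * / sqrt (2 ^ n) * (e00 (2 ^ n * dyad (S m) (S (2 * k)) - INR j) -
       (e00 (2 ^ n * dyad m k - INR j) + e00 (2 ^ n * dyad m (S k) - INR j)) / 2)). unfold Rdiv; ring.
      rewrite H. unfold Rdiv; ring.
Qed.

Lemma spike_series (m : nat) (c : R) : is_series (fun n => if Nat.eq_dec n m then c else 0) c.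
Proof. apply is_series_Reals. set (a := fun n => if Nat.eq_dec n m then c else 0).
  assert (H : forall n, ((n < m)%nat -> sum_f_R0 a n = 0) /\ ((m <= n)%nat -> sum_f_R0 a n = c)).
  { induction n.
    - simpl; unfold a. destruct (Nat.eq_dec 0 m) as [e|e]; split; intros H0.
      + lia.
      + reflexivity.
      + reflexivity.
      + assert (m = 0%nat) by lia. congruence.
    - destruct IHn as [I1 I2]. change (sum_f_R0 a (S n)) with (sum_f_R0 a n + a (S n)).
      assert (Ha : a (S n) = if Nat.eq_dec (S n) m then c else 0) by reflexivity. rewrite Ha.
      destruct (Nat.eq_dec (S n) m) as [e|e]; split; intros H0.
      + lia.
      + rewrite I1 by lia; lra.
      + rewrite I1 by lia; lra.
      + rewrite I2 by lia; lra. }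
  intros eps Heps. exists m. intros n Hn. destruct (H n) as [_ H2]. unfold R_dist. replace (sum_f_R0 _ n) with c. rewrite Rminus_diag, Rabs_R0. auto. symmetry. exact (H2 ltac:(lia)). Qed.

Lemma mid_identity f M m k : (forall n t, 0 <= t <= 1 -> Rabs (f n t) <= M) -> (k < 2 ^ m)%nat ->
  xf f (dyad (S m) (S (2 * k))) = (xf f (dyad m k) + xf f (dyad m (S k))) / 2 + theta f m k * / (2 * sqrt (2 ^ m)).
Proof. intros HM Hk. rewrite !xf_Sn.
  assert (E : Series (fun n => Sn f n (dyad (S m) (S (2 * k))) - (Sn f n (dyad m k) + Sn f n (dyad m (S k))) / 2)
     = theta f m k * / (2 * sqrt (2 ^ m))).
  { rewrite (Series_ext _ (fun n => if Nat.eq_dec n m then theta f m k * / (2 * sqrt (2 ^ m)) else 0)).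
    2: intros n; apply level_diff; auto.
    apply is_series_unique. apply spike_series. }
  rewrite Series_minus in E. rewrite (Series_ext (fun n => (Sn f n (dyad m k) + Sn f n (dyad m (S k))) / 2)
     (fun n => / 2 * (Sn f n (dyad m k) + Sn f n (dyad m (S k))))) in E by (intros; lra).
  rewrite Series_scal_l, Series_plus in E. lra.
  all: try apply (Sn_ex_series f M); auto.
  apply (ex_series_ext (fun n => / 2 * (Sn f n (dyad m k) + Sn f n (dyad m (S k))))). intros; lra.
  apply (@ex_series_scal_l R_AbsRing R_NormedModule). apply (@ex_series_plus R_AbsRing R_NormedModule); apply (Sn_ex_series f M); auto.
Qed.


Definition Dl (x : R -> R) m k := x (dyad m (S k)) - x (dyad m k).
Definition cf (f : nat -> R -> R) m k := theta f m k * / (2 * sqrt (2 ^ m)).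

Lemma incr_even f M m k : (forall n t, 0 <= t <= 1 -> Rabs (f n t) <= M) -> (k < 2 ^ m)%nat ->
  Dl (xf f) (S m) (2 * k) = Dl (xf f) m k / 2 + cf f m k.
Proof. intros HM Hk. unfold Dl, cf. rewrite dyad_double. rewrite (mid_identity f M m k); auto. lra. Qed.

Lemma incr_odd f M m k : (forall n t, 0 <= t <= 1 -> Rabs (f n t) <= M) -> (k < 2 ^ m)%nat ->
  Dl (xf f) (S m) (S (2 * k)) = Dl (xf f) m k / 2 - cf f m k.
Proof. intros HM Hk. unfold Dl, cf. replace (S (S (2 * k))) with (2 * S k)%nat by lia.
  rewrite dyad_double. rewrite (mid_identity f M m k); auto. lra. Qed.

Lemma cf_bound f M m k : (forall n t, 0 <= t <= 1 -> Rabs (f n t) <= M) -> (k < 2 ^ m)%nat ->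
  Rabs (cf f m k) <= M / (2 * sqrt (2 ^ m)).
Proof. intros HM Hk. unfold cf. pose proof (sqrt_pow2_pos m). rewrite Rabs_mult.
  rewrite (Rabs_pos_eq (/ _)) by (left; apply Rinv_0_lt_compat; lra). unfold Rdiv.
  apply Rmult_le_compat_r. left; apply Rinv_0_lt_compat; lra. apply theta_bound; auto. Qed.

Lemma aux_ineq C M r s : 0 < r -> 0 < s -> r * (C + M) <= 2 * C -> (C + M) / (2 * s) <= C / (r * s).
Proof. intros Hr Hs H. replace ((C + M) / (2 * s)) with ((r * (C + M)) * / (2 * r * s)) by (field; lra).
  replace (C / (r * s)) with ((2 * C) * / (2 * r * s)) by (field; lra).
  apply Rmult_le_compat_r; auto. left; apply Rinv_0_lt_compat. nra. Qed.

Lemma sqrt_pow2_S m : sqrt (2 ^ S m) = sqrt 2 * sqrt (2 ^ m).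
Proof. simpl pow. apply sqrt_mult_alt. lra. Qed.

Lemma Dl_bound f M : 0 <= M -> (forall n t, 0 <= t <= 1 -> Rabs (f n t) <= M) ->
  exists C, 0 <= C /\ forall m k, (k < 2 ^ m)%nat -> Rabs (Dl (xf f) m k) <= C / sqrt (2 ^ m).
Proof. intros HM0 HM. exists (3 * M + Rabs (Dl (xf f) 0 0)). split. pose proof (Rabs_pos (Dl (xf f) 0 0)). lra.
  set (C := 3 * M + Rabs (Dl (xf f) 0 0)). assert (HC : 3 * M <= C) by (pose proof (Rabs_pos (Dl (xf f) 0 0)); unfold C; lra).
  destruct sqrt2_facts as [R1 [R2 R3]].
  induction m; intros k Hk.
  - simpl in Hk. assert (k = 0%nat) by lia. subst. simpl pow. rewrite sqrt_1. unfold C. pose proof (Rabs_pos (Dl (xf f) 0 0)). lra.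
  - pose proof (sqrt_pow2_pos m) as Hs. rewrite sqrt_pow2_S.
    assert (key : forall d c, Rabs d <= C / sqrt (2 ^ m) -> Rabs c <= M / (2 * sqrt (2 ^ m)) ->
              Rabs (d / 2 + c) <= C / (sqrt 2 * sqrt (2 ^ m)) /\ Rabs (d / 2 - c) <= C / (sqrt 2 * sqrt (2 ^ m))).
    { intros d c Hd Hc. assert (Hmain : (C + M) / (2 * sqrt (2 ^ m)) <= C / (sqrt 2 * sqrt (2 ^ m))).
      { apply aux_ineq; try lra. nra. }
      assert (E1 : C / sqrt (2 ^ m) / 2 + M / (2 * sqrt (2 ^ m)) = (C + M) / (2 * sqrt (2 ^ m))) by (field; lra).
      split.
      - eapply Rle_trans; [apply Rabs_triang|]. unfold Rdiv at 1. rewrite Rabs_mult, (Rabs_pos_eq (/2)) by lra. lra.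
      - unfold Rminus. eapply Rle_trans; [apply Rabs_triang|]. rewrite Rabs_Ropp. unfold Rdiv at 1. rewrite Rabs_mult, (Rabs_pos_eq (/2)) by lra. lra. }
    simpl in Hk. destruct (Nat.Even_or_Odd k) as [[j ->]|[j ->]].
    + assert (Hj : (j < 2 ^ m)%nat) by lia. rewrite (incr_even f M m j HM Hj).
      apply key. apply IHm; auto. apply cf_bound; auto.
    + assert (Hj : (j < 2 ^ m)%nat) by lia. replace (2 * j + 1)%nat with (S (2 * j)) by lia. rewrite (incr_odd f M m j HM Hj).
      apply key. apply IHm; auto. apply cf_bound; auto.
Qed.

Definition Rsum (f g : nat -> R -> R) m t :=
  sumk (fun k => if Rle_dec (dyad m k) t then theta f m k * theta g m k / 2 ^ m else 0) (2 ^ m)%nat.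

Lemma covar_Dl x y n t : covar_n x y n t =
  sumk (fun k => if Rle_dec (dyad n k) t then Dl x n k * Dl y n k else 0) (2 ^ n)%nat.
Proof. reflexivity. Qed.

Lemma dyad_lt m k t : dyad m k <= t -> dyad (S m) (S (2 * k)) <= dyad m (S k).
Proof. intros _. unfold dyad. rewrite !S_INR, mult_INR. simpl pow. simpl INR.
  pose proof (pow2_pos m). apply Rmult_le_reg_r with (2 * 2 ^ m). lra. field_simplify; lra. Qed.

Lemma dyad_le_mid m k : dyad m k <= dyad (S m) (S (2 * k)).
Proof. unfold dyad. rewrite !S_INR, mult_INR. simpl pow. simpl INR.
  pose proof (pow2_pos m). apply Rmult_le_reg_r with (2 * 2 ^ m). lra. field_simplify; lra. Qed.

Lemma covar_rec f g Mf Mg Cx Cy m t :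
  (forall n t, 0 <= t <= 1 -> Rabs (f n t) <= Mf) -> (forall n t, 0 <= t <= 1 -> Rabs (g n t) <= Mg) ->
  0 <= Cx -> 0 <= Cy ->
  (forall m k, (k < 2 ^ m)%nat -> Rabs (Dl (xf f) m k) <= Cx / sqrt (2 ^ m)) ->
  (forall m k, (k < 2 ^ m)%nat -> Rabs (Dl (xf g) m k) <= Cy / sqrt (2 ^ m)) ->
  Rabs (covar_n (xf f) (xf g) (S m) t - (covar_n (xf f) (xf g) m t + Rsum f g m t) / 2) <= Cx * Cy / 2 ^ S m.
Proof. intros HMf HMg HCx HCy HDx HDy.
  set (x := xf f). set (y := xf g).
  rewrite !covar_Dl. change (2 ^ S m)%nat with (2 * 2 ^ m)%nat. rewrite sumk_pair.
  unfold Rsum. rewrite <- sumk_plus.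
  replace ((sumk _ _) / 2) with (sumk (fun k => / 2 * ((if Rle_dec (dyad m k) t then Dl x m k * Dl y m k else 0) +
     (if Rle_dec (dyad m k) t then theta f m k * theta g m k / 2 ^ m else 0))) (2 ^ m)%nat)
    by (rewrite sumk_scal; field).
  rewrite <- sumk_minus.
  pose proof (sqrt_pow2_pos m) as Hs. pose proof (sqrt_pow2_sq m) as Hs2. pose proof (pow2_pos m) as Hp.
  set (B := Cx * Cy / 2 ^ S m).
  assert (HB : 0 <= B) by (unfold B; apply Rmult_le_pos; [nra| left; apply Rinv_0_lt_compat, pow2_pos]).
  set (e := fun k => (if Rle_dec (dyad (S m) (2 * k)) t then Dl x (S m) (2 * k) * Dl y (S m) (2 * k) else 0) +
      (if Rle_dec (dyad (S m) (S (2 * k))) t then Dl x (S m) (S (2 * k)) * Dl y (S m) (S (2 * k)) else 0) -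
      / 2 * ((if Rle_dec (dyad m k) t then Dl x m k * Dl y m k else 0) +
      (if Rle_dec (dyad m k) t then theta f m k * theta g m k / 2 ^ m else 0))).
  assert (He : forall k, (k < 2 ^ m)%nat -> e k = if Rle_dec (dyad m k) t then
     (if Rle_dec (dyad (S m) (S (2 * k))) t then 0 else - (Dl x (S m) (S (2 * k)) * Dl y (S m) (S (2 * k)))) else 0).
  { intros k Hk. unfold e. rewrite dyad_double.
    destruct (Rle_dec (dyad m k) t) as [H1|H1].
    - unfold x, y. rewrite (incr_even f Mf m k), (incr_even g Mg m k) by auto.
      destruct Rle_dec as [H2|H2].
      + rewrite (incr_odd f Mf m k), (incr_odd g Mg m k) by auto. unfold cf.
        set (s := sqrt (2 ^ m)) in *. rewrite <- Hs2. field. lra.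
      + rewrite (incr_odd f Mf m k), (incr_odd g Mg m k) by auto. unfold cf.
        set (s := sqrt (2 ^ m)) in *. rewrite <- Hs2. field. lra.
    - destruct Rle_dec as [H2|H2]. pose proof (dyad_le_mid m k). lra. lra. }
  change (Rabs (sumk e (2 ^ m)%nat) <= B).
  eapply Rle_trans. apply (sumk_abs_le _ (fun k => Rabs (e k))). intros; lra.
  apply (sumk_local _ B (t * 2 ^ m)); auto.
  - intros k Hk. split. apply Rabs_pos. rewrite He by auto.
    destruct Rle_dec; [destruct Rle_dec|]; try (rewrite Rabs_R0; auto).
    rewrite Rabs_Ropp, Rabs_mult.
    assert (Hk2 : (S (2 * k) < 2 ^ S m)%nat) by (simpl; lia).
    pose proof (HDx _ _ Hk2). pose proof (HDy _ _ Hk2).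
    pose proof (sqrt_pow2_pos (S m)) as Q1. pose proof (sqrt_pow2_sq (S m)) as Q2.
    replace B with (Cx / sqrt (2 ^ S m) * (Cy / sqrt (2 ^ S m))).
    apply Rmult_le_compat; try apply Rabs_pos; [exact H | exact H0].
    unfold B. set (s := sqrt (2 ^ S m)) in *. rewrite <- Q2. field. lra.
  - intros k Hk Hloc. rewrite He by auto. destruct Rle_dec as [H1|H1]; [|apply Rabs_R0].
    destruct Rle_dec as [H2|H2]; [apply Rabs_R0|]. exfalso.
    destruct Hloc as [Hl|Hl].
    + unfold dyad in H1. apply (Rmult_le_compat_r (2 ^ m)) in H1; [|lra].
      replace (INR k / 2 ^ m * 2 ^ m) with (INR k) in H1 by (field; lra). lra.
    + apply H2. eapply Rle_trans. apply (dyad_lt m k t H1). unfold dyad. rewrite S_INR.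
      apply Rmult_le_reg_r with (2 ^ m). lra. replace ((INR k + 1) / 2 ^ m * 2 ^ m) with (INR k + 1) by (field; lra). lra.
Qed.


Lemma avg_lim (a b : nat -> R) (L : R) : is_lim_seq b L ->
  is_lim_seq (fun m => a (S m) - (a m + b m) / 2) 0 -> is_lim_seq a L.
Proof. intros Hb He. apply (proj1 (is_lim_seq_Reals b L)) in Hb. apply (proj1 (is_lim_seq_Reals _ 0)) in He. apply (proj2 (is_lim_seq_Reals a L)).
  intros eps Heps.
  destruct (Hb (eps / 4) ltac:(lra)) as [N1 H1]. destruct (He (eps / 8) ltac:(lra)) as [N2 H2].
  set (N := (N1 + N2)%nat).
  assert (Hu : forall m, (m >= N)%nat -> Rabs (a (S m) - L - (a m - L) / 2) < eps / 4).
  { intros m Hm. specialize (H1 m ltac:(unfold N in *; lia)). specialize (H2 m ltac:(unfold N in *; lia)).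
    unfold R_dist in *. rewrite Rminus_0_r in H2.
    replace (a (S m) - L - (a m - L) / 2) with ((a (S m) - (a m + b m) / 2) + (b m - L) / 2) by field.
    eapply Rle_lt_trans. apply Rabs_triang. unfold Rdiv at 2. rewrite Rabs_mult, (Rabs_pos_eq (/2)) by lra. lra. }
  set (D := Rabs (a N - L)).
  assert (Hj : forall j, Rabs (a (N + j)%nat - L) <= D * (/ 2) ^ j + eps / 2).
  { induction j. simpl. rewrite Nat.add_0_r. unfold D. lra.
    replace (N + S j)%nat with (S (N + j)) by lia.
    specialize (Hu (N + j)%nat ltac:(lia)).
    replace (a (S (N + j)) - L) with ((a (S (N + j)) - L - (a (N + j)%nat - L) / 2) + (a (N + j)%nat - L) / 2) by field.
    eapply Rle_trans. apply Rabs_triang. unfold Rdiv at 2. rewrite Rabs_mult, (Rabs_pos_eq (/2)) by lra.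
    simpl pow. lra. }
  assert (HD : 0 <= D) by apply Rabs_pos.
  destruct (pow_lt_1_zero (/ 2) ltac:(rewrite Rabs_pos_eq; lra) (eps / (2 * (D + 1))) ltac:(apply Rdiv_lt_0_compat; lra)) as [J HJ].
  exists (N + J)%nat. intros n Hn. unfold R_dist.
  replace n with (N + (n - N))%nat by lia. specialize (Hj (n - N)%nat). assert (HnJ : (n - N >= J)%nat) by lia. specialize (HJ (n - N)%nat HnJ).
  rewrite Rabs_pos_eq in HJ by (apply pow_le; lra).
  assert (HH : D * (/ 2) ^ (n - N) < (D + 1) * (eps / (2 * (D + 1)))).
  { apply Rle_lt_trans with ((D + 1) * (/ 2) ^ (n - N)). apply Rmult_le_compat_r; [apply pow_le; lra|lra].
    apply Rmult_lt_compat_l; lra. }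
  replace ((D + 1) * (eps / (2 * (D + 1)))) with (eps / 2) in HH by (field; intro; lra). lra.
Qed.


Lemma sumk_shift F N : sumk F (S N) = F 0%nat + sumk (fun i => F (S i)) N.
Proof. induction N. simpl; lra. rewrite sumk_S, IHN, sumk_S. simpl. lra. Qed.

Lemma RS_map (H : R -> R) g N : forall s,
  Riemann_sum H (SF_seq_f2 (fun x _ => x) (seq.map g (seq.iota s (S N)))) =
  sumk (fun i => (g (S (s + i)) - g (s + i)%nat) * H (g (s + i)%nat)) N.
Proof. induction N; intros s. reflexivity.
  change (seq.iota s (S (S N))) with (cons s (seq.iota (S s) (S N))).
  change (seq.map g (cons s (seq.iota (S s) (S N)))) with (cons (g s) (seq.map g (seq.iota (S s) (S N)))).
  rewrite SF_cons_f2 by (simpl; lia). rewrite Riemann_sum_cons. rewrite IHN. rewrite sumk_shift.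
  simpl. rewrite Nat.add_0_r.
  replace (sumk (fun i : nat => (g (S (s + S i)) - g (s + S i)%nat) * H (g (s + S i)%nat)) N) with
    (sumk (fun i : nat => (g (S (S s + i)) - g (S s + i)%nat) * H (g (S s + i)%nat)) N).
  reflexivity. apply sumk_ext. intros. replace (s + S k)%nat with (S s + k)%nat by lia. reflexivity.
Qed.

Lemma RS_unif (H : R -> R) m :
  Riemann_sum H (SF_seq_f2 (fun x _ => x) (unif_part 0 1 (2 ^ m - 1))) =
  sumk (fun k => H (dyad m k) / 2 ^ m) (2 ^ m)%nat.
Proof. unfold unif_part, seq.mkseq.
  assert (E : (S (2 ^ m - 1) = 2 ^ m)%nat) by (pose proof (Nat.pow_nonzero 2 m); lia).
  rewrite RS_map. rewrite E. apply sumk_ext. intros k Hk.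
  assert (E2 : INR (2 ^ m - 1) + 1 = 2 ^ m) by (rewrite <- S_INR, E; apply INR_pow2).
  rewrite E2. rewrite !Nat.add_0_l. rewrite S_INR. unfold dyad. pose proof (pow2_pos m).
  replace (0 + INR k * (1 - 0) / 2 ^ m) with (INR k / 2 ^ m) by (field; lra). field. lra. Qed.

Lemma riemann_dyadic (H : R -> R) (I : R) : is_RInt H 0 1 I ->
  is_lim_seq (fun m => sumk (fun k => H (dyad m k) / 2 ^ m) (2 ^ m)%nat) I.
Proof. intros HI. apply (proj2 (is_lim_seq_Reals _ I)). intros eps Heps.
  assert (Hl : locally I (ball I (mkposreal eps Heps))) by apply locally_ball.
  specialize (HI _ Hl). destruct HI as [delta Hd].
  destruct (pow_lt_1_zero (/ 2) ltac:(rewrite Rabs_pos_eq; lra) delta (cond_pos delta)) as [N HN].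
  exists N. intros m Hm.
  destruct (Riemann_fine_unif_part (fun x _ => x) 0 1 (2 ^ m - 1)) as [H1 [H2 [H3 H4]]]. intros; lra. lra.
  assert (E : INR (2 ^ m - 1) + 1 = 2 ^ m).
  { rewrite <- S_INR. replace (S (2 ^ m - 1)) with (2 ^ m)%nat by (pose proof (Nat.pow_nonzero 2 m); lia). apply INR_pow2. }
  rewrite E in H1.
  assert (Hstep : seq_step (SF_lx (SF_seq_f2 (fun x _ => x) (unif_part 0 1 (2 ^ m - 1)))) < delta).
  { eapply Rle_lt_trans. apply H1. specialize (HN m Hm). rewrite Rabs_pos_eq in HN by (apply pow_le; lra).
    rewrite pow_inv in HN. lra. }
  specialize (Hd _ Hstep). rewrite Rmin_left, Rmax_right in Hd by lra.
  specialize (Hd (conj H2 (conj H3 H4))).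
  rewrite <- RS_unif. unfold R_dist.
  replace (1 - 0) with 1 in Hd by ring. rewrite sign_eq_1 in Hd by lra. assert (Hs1 : forall y : R, scal 1 y = y) by (intros; apply (scal_one (V := R_ModuleSpace))). rewrite Hs1 in Hd.
  exact Hd.
Qed.


Lemma pos_Rl_map (g : R -> R) l i : (i < length l)%nat -> RList.pos_Rl (List.map g l) i = g (RList.pos_Rl l i).
Proof. revert i. induction l; intros i Hi; simpl in *. lia. destruct i. reflexivity. apply IHl. lia. Qed.

Lemma IsStepFun_comp a b (phi : StepFun a b) (g : R -> R) : IsStepFun (fun x => g (phi x)) a b.
Proof. destruct phi as [fe [l [lf [H1 [H2 [H3 [H4 H5]]]]]]]. simpl.
  exists l. exists (List.map g lf). split; [auto|split; [auto|split; [auto|split]]].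
  rewrite length_map. auto.
  intros i Hi x Hx. rewrite pos_Rl_map. rewrite (H5 i Hi x Hx). reflexivity. lia. Qed.

Lemma Riemann_integrable_sq f a b B : 0 <= B -> (forall x, Rmin a b <= x <= Rmax a b -> Rabs (f x) <= B) ->
  Riemann_integrable f a b -> Riemann_integrable (fun x => f x * f x) a b.
Proof. intros HB HfB Hf.
  intros eps.
  assert (Hpos : 0 < eps / (1 + 2 * B)). { apply Rdiv_lt_0_compat. apply cond_pos. lra. }
  destruct (Hf (mkposreal _ Hpos)) as [phi [psi [Hp1 Hp2]]].
  set (clip := fun y => Rmax (- B) (Rmin B y)).
  exists (mkStepFun (IsStepFun_comp a b phi (fun y => clip y * clip y))).
  exists (mkStepFun (StepFun_P28 (2 * B) psi psi)).
  split.
  - intros t Ht. simpl. specialize (Hp1 t Ht). specialize (HfB t Ht).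
    assert (Hc : Rabs (f t - clip (phi t)) <= Rabs (f t - phi t)).
    { unfold clip, Rmax, Rmin. apply Rabs_le_between' in HfB || idtac.
      unfold Rabs in *. repeat destruct Rcase_abs; repeat destruct Rle_dec; lra. }
    assert (Hc2 : Rabs (f t + clip (phi t)) <= 2 * B).
    { unfold clip, Rmax, Rmin. unfold Rabs in *. repeat destruct Rcase_abs; repeat destruct Rle_dec; lra. }
    replace (f t * f t - clip (phi t) * clip (phi t)) with ((f t - clip (phi t)) * (f t + clip (phi t))) by ring.
    rewrite Rabs_mult. assert (0 <= psi t) by (pose proof (Rabs_pos (f t - phi t)); lra).
    apply Rle_trans with (psi t * (2 * B)). apply Rmult_le_compat; auto using Rabs_pos. lra. nra.
  - rewrite StepFun_P30. simpl in Hp2.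
    replace (RiemannInt_SF psi + 2 * B * RiemannInt_SF psi) with ((1 + 2 * B) * RiemannInt_SF psi) by ring.
    rewrite Rabs_mult, (Rabs_pos_eq (1 + 2 * B)) by lra.
    apply Rmult_lt_compat_l with (r := 1 + 2 * B) in Hp2; [|lra].
    replace ((1 + 2 * B) * (eps / (1 + 2 * B))) with (pos eps) in Hp2 by (field; lra). exact Hp2.
Qed.

Lemma ex_RInt_mult f g a b : ex_RInt f a b -> ex_RInt g a b -> ex_RInt (fun x => f x * g x) a b.
Proof. intros Hf Hg. destruct (ex_RInt_ub _ _ _ Hf) as [Mf HMf]. destruct (ex_RInt_ub _ _ _ Hg) as [Mg HMg].
  assert (HMf' : forall t, Rmin a b <= t <= Rmax a b -> Rabs (f t) <= Mf) by (intros t Ht; exact (HMf t Ht)).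
  assert (HMg' : forall t, Rmin a b <= t <= Rmax a b -> Rabs (g t) <= Mg) by (intros t Ht; exact (HMg t Ht)).
  clear HMf HMg. rename HMf' into HMf. rename HMg' into HMg.
  assert (Hm : Rmin a b <= Rmin a b <= Rmax a b) by (split; [lra| apply Rmin_Rmax]).
  assert (HMf0 : 0 <= Mf). { specialize (HMf (Rmin a b) Hm). pose proof (Rabs_pos (f (Rmin a b))). lra. }
  assert (HMg0 : 0 <= Mg). { specialize (HMg (Rmin a b) Hm). pose proof (Rabs_pos (g (Rmin a b))). lra. }
  apply ex_RInt_Reals_0 in Hf. apply ex_RInt_Reals_0 in Hg.
  apply ex_RInt_Reals_1.
  apply Riemann_integrable_ext with (f := fun x => / 4 * ((fun y => f y + g y) x * (fun y => f y + g y) x - (fun y => f y - g y) x * (fun y => f y - g y) x)).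
  intros; field.
  apply Riemann_integrable_scal. apply Riemann_integrable_minus; apply (Riemann_integrable_sq _ _ _ (Mf + Mg)).
  lra. intros x Hx. specialize (HMf x Hx). specialize (HMg x Hx). simpl in *. eapply Rle_trans. apply Rabs_triang. lra.
  apply Riemann_integrable_plus; auto.
  lra. intros x Hx. specialize (HMf x Hx). specialize (HMg x Hx). simpl in *. unfold Rminus. eapply Rle_trans. apply Rabs_triang. rewrite Rabs_Ropp. lra.
  apply Riemann_integrable_minus; auto.
Qed.


Lemma ex_RInt_sub (h : R -> R) x y : 0 <= x <= y -> y <= 1 -> ex_RInt h 0 1 -> ex_RInt h x y.
Proof. intros Hxy Hy H. apply (@ex_RInt_Chasles_1 R_CompleteNormedModule h x y 1). lra. apply (@ex_RInt_Chasles_2 R_CompleteNormedModule h 0 x 1). lra. auto. Qed.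

Lemma is_RInt_trunc (h : R -> R) t : 0 <= t <= 1 -> ex_RInt h 0 1 ->
  is_RInt (fun s => if Rle_dec s t then h s else 0) 0 1 (RInt h 0 t).
Proof. intros Ht Hh.
  assert (H1 : is_RInt (fun s => if Rle_dec s t then h s else 0) 0 t (RInt h 0 t)).
  { apply is_RInt_ext with h. intros x Hx. rewrite Rmin_left, Rmax_right in Hx by lra.
    destruct Rle_dec; auto. lra. apply (@RInt_correct R_CompleteNormedModule). apply ex_RInt_sub; auto; lra. }
  assert (H2 : is_RInt (fun s => if Rle_dec s t then h s else 0) t 1 (scal (1 - t) 0)).
  { apply is_RInt_ext with (fun _ => 0). intros x Hx. rewrite Rmin_left, Rmax_right in Hx by lra.
    destruct Rle_dec; auto. lra. apply (@is_RInt_const R_NormedModule). }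
  pose proof (is_RInt_Chasles _ _ _ _ _ _ H1 H2) as H3.
  refine (eq_ind _ (fun v => is_RInt _ 0 1 v) H3 _ _).
  change (RInt h 0 t + (1 - t) * 0 = RInt h 0 t). ring. Qed.

Lemma Rsum_lim f g finf ginf t : inF f finf -> inF g ginf -> 0 <= t <= 1 ->
  is_lim_seq (fun m => Rsum f g m t) (RInt (fun s => finf s * ginf s) 0 t).
Proof. intros Hf Hg Ht.
  destruct (inF_bound f finf Hf) as [Mf [HMf0 [HMf HMfi]]].
  destruct (inF_bound g ginf Hg) as [Mg [HMg0 [HMg HMgi]]].
  assert (Hfg : ex_RInt (fun s => finf s * ginf s) 0 1).
  { apply ex_RInt_mult. apply Hf. apply Hg. }
  pose proof (riemann_dyadic _ _ (is_RInt_trunc _ t Ht Hfg)) as HR.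
  apply (proj1 (is_lim_seq_Reals _ _)) in HR. apply (proj2 (is_lim_seq_Reals _ _)).
  intros eps Heps.
  destruct (HR (eps / 2) ltac:(lra)) as [N1 HN1].
  set (d := eps / (4 * (Mf + Mg + 1))).
  assert (Hd : 0 < d) by (unfold d; apply Rdiv_lt_0_compat; lra).
  destruct Hf as [_ [Huf _]]. destruct Hg as [_ [Hug _]].
  destruct (Huf d Hd) as [N2 HN2]. destruct (Hug d Hd) as [N3 HN3].
  exists (N1 + N2 + N3)%nat. intros m Hm.
  specialize (HN1 m ltac:(lia)). unfold R_dist in *.
  set (P := sumk (fun k => (if Rle_dec (dyad m k) t then finf (dyad m k) * ginf (dyad m k) else 0) / 2 ^ m) (2 ^ m)%nat) in *.
  assert (Hdiff : Rabs (Rsum f g m t - P) <= eps / 2).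
  { unfold Rsum, P. rewrite <- sumk_minus.
    eapply Rle_trans. apply sumk_const_le with (B := eps / 2 / 2 ^ m).
    - intros k Hk. pose proof (pow2_pos m). destruct Rle_dec.
      + unfold theta. assert (Hdy : 0 <= dyad m k <= 1) by (apply dyad_in01; lia).
        replace (f m (dyad m k) * g m (dyad m k) / 2 ^ m - finf (dyad m k) * ginf (dyad m k) / 2 ^ m)
          with ((f m (dyad m k) * (g m (dyad m k) - ginf (dyad m k)) + ginf (dyad m k) * (f m (dyad m k) - finf (dyad m k))) * / 2 ^ m)
          by (field; lra).
        rewrite Rabs_mult, (Rabs_pos_eq (/ 2 ^ m)) by (left; apply Rinv_0_lt_compat; lra).
        unfold Rdiv at 1. apply Rmult_le_compat_r. left; apply Rinv_0_lt_compat; lra.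
        eapply Rle_trans. apply Rabs_triang. rewrite !Rabs_mult.
        specialize (HN2 m (dyad m k) ltac:(lia) Hdy). specialize (HN3 m (dyad m k) ltac:(lia) Hdy).
        specialize (HMf m _ Hdy). specialize (HMgi _ Hdy).
        assert (Mf * d + Mg * d <= eps / 2).
        { unfold d. replace (Mf * (eps / (4 * (Mf + Mg + 1))) + Mg * (eps / (4 * (Mf + Mg + 1))))
            with ((Mf + Mg) / (Mf + Mg + 1) * (eps / 4)) by (field; lra).
          assert ((Mf + Mg) / (Mf + Mg + 1) <= 1). { apply Rmult_le_reg_r with (Mf + Mg + 1). lra. field_simplify; lra. }
          nra. }
        assert (Rabs (f m (dyad m k)) * Rabs (g m (dyad m k) - ginf (dyad m k)) <= Mf * d).
        { apply Rmult_le_compat; auto using Rabs_pos. lra. }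
        assert (Rabs (ginf (dyad m k)) * Rabs (f m (dyad m k) - finf (dyad m k)) <= Mg * d).
        { apply Rmult_le_compat; auto using Rabs_pos. lra. }
        lra.
      + unfold Rdiv. rewrite Rmult_0_l, Rminus_0_r, Rabs_R0. apply Rmult_le_pos. lra. left; apply Rinv_0_lt_compat; lra.
    - rewrite INR_pow2. pose proof (pow2_pos m). right; field; lra. }
  replace (Rsum f g m t - RInt (fun s => finf s * ginf s) 0 t) with
    ((Rsum f g m t - P) + (P - RInt (fun s => finf s * ginf s) 0 t)) by ring.
  eapply Rle_lt_trans. apply Rabs_triang. assert (HP : Rabs (P - RInt (fun s => finf s * ginf s) 0 t) < eps / 2) by exact HN1. lra.
Qed.


Lemma lim_geom_bound (u : nat -> R) K : 0 <= K -> (forall m, Rabs (u m) <= K * (/ 2) ^ m) -> is_lim_seq u 0.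
Proof. intros HK H. apply (proj2 (is_lim_seq_Reals _ _)). intros eps Heps.
  destruct (pow_lt_1_zero (/ 2) ltac:(rewrite Rabs_pos_eq; lra) (eps / (K + 1)) ltac:(apply Rdiv_lt_0_compat; lra)) as [N HN].
  exists N. intros n Hn. unfold R_dist. rewrite Rminus_0_r. specialize (HN n Hn). specialize (H n).
  rewrite Rabs_pos_eq in HN by (apply pow_le; lra).
  assert (K * (/ 2) ^ n < eps).
  { apply Rle_lt_trans with ((K + 1) * (/ 2) ^ n). apply Rmult_le_compat_r; [apply pow_le; lra|lra].
    replace eps with ((K + 1) * (eps / (K + 1))) by (field; intro; lra). apply Rmult_lt_compat_l; lra. }
  lra. Qed.

Lemma covar_lim f g finf ginf t : inF f finf -> inF g ginf -> 0 <= t <= 1 ->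
  is_lim_seq (fun n => covar_n (xf f) (xf g) n t) (RInt (fun s => finf s * ginf s) 0 t).
Proof. intros Hf Hg Ht.
  destruct (inF_bound f finf Hf) as [Mf [HMf0 [HMf HMfi]]].
  destruct (inF_bound g ginf Hg) as [Mg [HMg0 [HMg HMgi]]].
  destruct (Dl_bound f Mf HMf0 HMf) as [Cx [HCx HDx]].
  destruct (Dl_bound g Mg HMg0 HMg) as [Cy [HCy HDy]].
  apply avg_lim with (b := fun m => Rsum f g m t).
  apply Rsum_lim; auto.
  apply lim_geom_bound with (K := Cx * Cy). nra.
  intros m. eapply Rle_trans. apply (covar_rec f g Mf Mg Cx Cy m t); auto.
  rewrite pow_inv. simpl pow. pose proof (pow2_pos m). unfold Rdiv. apply Rmult_le_compat_l. nra. apply Rinv_le_contravar; lra.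
Qed.

Lemma RInt_cont h : ex_RInt h 0 1 -> (exists B, forall s, 0 <= s <= 1 -> Rabs (h s) <= B) ->
  cont01 (fun t => RInt h 0 t).
Proof. intros Hh [B HB] t Ht.
  assert (HB0 : 0 <= B) by (specialize (HB 0 ltac:(lra)); pose proof (Rabs_pos (h 0)); lra).
  assert (Hlip : forall u v, 0 <= u <= v -> v <= 1 -> Rabs (RInt h 0 v - RInt h 0 u) <= (v - u) * B).
  { intros u v Huv Hv.
    assert (E : RInt h 0 v - RInt h 0 u = RInt h u v).
    { rewrite <- (@RInt_Chasles R_CompleteNormedModule h 0 u v). change (plus ?a ?b) with (a + b). ring.
      apply ex_RInt_sub; auto; lra. apply ex_RInt_sub; auto; lra. }
    rewrite E. apply abs_RInt_le_const. lra. apply ex_RInt_sub; auto; lra.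
    intros s Hs. apply HB. lra. }
  apply (proj2 (filterlim_locally _ _)). intros eps.
  exists (mkposreal (eps / (B + 1)) ltac:(apply Rdiv_lt_0_compat; [apply cond_pos|lra])).
  intros y Hy Dy. change (Rabs (y - t) < eps / (B + 1)) in Hy.
  change (Rabs (RInt h 0 y - RInt h 0 t) < eps).
  pose proof (cond_pos eps) as He.
  assert (Hk : Rabs (y - t) * B < eps).
  { apply Rle_lt_trans with (Rabs (y - t) * (B + 1)). apply Rmult_le_compat_l. apply Rabs_pos. lra.
    apply Rmult_lt_reg_r with (/ (B + 1)). apply Rinv_0_lt_compat; lra.
    replace (eps * / (B + 1)) with (eps / (B + 1)) by reflexivity.
    replace (Rabs (y - t) * (B + 1) * / (B + 1)) with (Rabs (y - t)) by (field; lra). lra. }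
  destruct (Rle_lt_dec t y).
  - pose proof (Hlip t y ltac:(lra) ltac:(lra)). rewrite Rabs_pos_eq in Hk by lra. lra.
  - pose proof (Hlip y t ltac:(lra) ltac:(lra)). rewrite Rabs_minus_sym. rewrite Rabs_left in Hk by lra. lra.
Qed.

Lemma prod_bound f g finf ginf : inF f finf -> inF g ginf ->
  exists B, forall s, 0 <= s <= 1 -> Rabs (finf s * ginf s) <= B.
Proof. intros Hf Hg. destruct (inF_bound f finf Hf) as [Mf [HMf0 [_ HMfi]]].
  destruct (inF_bound g ginf Hg) as [Mg [HMg0 [_ HMgi]]].
  exists (Mf * Mg). intros s Hs. rewrite Rabs_mult. apply Rmult_le_compat; auto using Rabs_pos. Qed.


Lemma Sn_lin f g a b n t : Sn (fun n s => a * f n s + b * g n s) n t = a * Sn f n t + b * Sn g n t.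
Proof. unfold Sn, theta. rewrite <- !sumk_scal, <- sumk_plus. apply sumk_ext. intros; ring. Qed.

Lemma inF_lin f g finf ginf a b : inF f finf -> inF g ginf ->
  inF (fun n s => a * f n s + b * g n s) (fun s => a * finf s + b * ginf s).
Proof. intros [Bf [Uf If]] [Bg [Ug Ig]]. split; [|split].
  - intros n. destruct (Bf n) as [M1 H1]. destruct (Bg n) as [M2 H2]. exists (Rabs a * M1 + Rabs b * M2).
    intros t Ht. eapply Rle_trans. apply Rabs_triang. rewrite !Rabs_mult.
    apply Rplus_le_compat; apply Rmult_le_compat_l; auto using Rabs_pos.
  - intros eps Heps. set (d := eps / (Rabs a + Rabs b + 1)).
    assert (Hd : 0 < d) by (unfold d; apply Rdiv_lt_0_compat; pose proof (Rabs_pos a); pose proof (Rabs_pos b); lra).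
    destruct (Uf d Hd) as [N1 H1]. destruct (Ug d Hd) as [N2 H2]. exists (N1 + N2)%nat.
    intros n t Hn Ht. specialize (H1 n t ltac:(lia) Ht). specialize (H2 n t ltac:(lia) Ht).
    replace (a * f n t + b * g n t - (a * finf t + b * ginf t)) with (a * (f n t - finf t) + b * (g n t - ginf t)) by ring.
    eapply Rle_lt_trans. apply Rabs_triang. rewrite !Rabs_mult.
    pose proof (Rabs_pos a). pose proof (Rabs_pos b).
    assert ((Rabs a + Rabs b) * d < eps).
    { unfold d. apply Rmult_lt_reg_r with (Rabs a + Rabs b + 1). lra.
      replace ((Rabs a + Rabs b) * (eps / (Rabs a + Rabs b + 1)) * (Rabs a + Rabs b + 1)) with ((Rabs a + Rabs b) * eps) by (field; lra).
      nra. }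
    assert (Rabs a * Rabs (f n t - finf t) <= Rabs a * d) by (apply Rmult_le_compat_l; lra).
    assert (Rabs b * Rabs (g n t - ginf t) <= Rabs b * d) by (apply Rmult_le_compat_l; lra).
    lra.
  - apply (ex_RInt_plus (V := R_NormedModule) (fun y => a * finf y) (fun y => b * ginf y)).
    apply (ex_RInt_scal (V := R_NormedModule)); auto. apply (ex_RInt_scal (V := R_NormedModule)); auto.
Qed.

Lemma xf_lin f g finf ginf a b t : inF f finf -> inF g ginf ->
  xf (fun n s => a * f n s + b * g n s) t = a * xf f t + b * xf g t.
Proof. intros Hf Hg. destruct (inF_bound f finf Hf) as [Mf [_ [HMf _]]].
  destruct (inF_bound g ginf Hg) as [Mg [_ [HMg _]]].
  rewrite !xf_Sn. rewrite (Series_ext _ (fun n => a * Sn f n t + b * Sn g n t)) by (intros; apply Sn_lin).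
  rewrite Series_plus, !Series_scal_l. reflexivity.
  apply (@ex_series_scal_l R_AbsRing R_NormedModule). apply (Sn_ex_series f Mf); auto.
  apply (@ex_series_scal_l R_AbsRing R_NormedModule). apply (Sn_ex_series g Mg); auto.
Qed.

Theorem proposition2p4 :
  (* (a) quadratic variation *)
  (forall (f : nat -> R -> R) (finf : R -> R), inF f finf ->
     (forall t, 0 <= t <= 1 ->
        is_lim_seq (fun n => qv_n (xf f) n t) (RInt (fun s => finf s ^ 2) 0 t)) /\
     cont01 (fun t => RInt (fun s => finf s ^ 2) 0 t)) /\
  (* (b) covariation *)
  (forall (f g : nat -> R -> R) (finf ginf : R -> R), inF f finf -> inF g ginf ->
     (forall t, 0 <= t <= 1 ->
        is_lim_seq (fun n => covar_n (xf f) (xf g) n t)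
                   (RInt (fun s => finf s * ginf s) 0 t)) /\
     cont01 (fun t => RInt (fun s => finf s * ginf s) 0 t)) /\
  (* {x_f : f in F} is a vector space *)
  (exists f0 finf0, inF f0 finf0) /\
  (forall (f g : nat -> R -> R) (finf ginf : R -> R) (a b : R),
     inF f finf -> inF g ginf ->
     exists (h : nat -> R -> R) (hinf : R -> R), inF h hinf /\
       forall t, 0 <= t <= 1 -> xf h t = a * xf f t + b * xf g t).
Proof.
  assert (PB : forall (f g : nat -> R -> R) (finf ginf : R -> R), inF f finf -> inF g ginf ->
     (forall t, 0 <= t <= 1 ->
        is_lim_seq (fun n => covar_n (xf f) (xf g) n t)
                   (RInt (fun s => finf s * ginf s) 0 t)) /\
     cont01 (fun t => RInt (fun s => finf s * ginf s) 0 t)).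
  { intros f g finf ginf Hf Hg. split.
    - intros t Ht. apply covar_lim; auto.
    - apply RInt_cont. apply ex_RInt_mult; [apply Hf|apply Hg]. eapply prod_bound; eauto. }
  split; [|split; [exact PB|split]].
  - intros f finf Hf.
    assert (Esq : (fun s => finf s ^ 2) = (fun s => finf s * finf s)) by (apply functional_extensionality; intro; ring).
    rewrite Esq. apply (PB f f finf finf Hf Hf).
  - exists (fun _ _ => 0), (fun _ => 0). split; [|split].
    + intros n. exists 0. intros. rewrite Rabs_R0. lra.
    + intros eps Heps. exists 0%nat. intros. rewrite Rminus_0_r, Rabs_R0. lra.
    + apply (ex_RInt_const (V := R_NormedModule)).
  - intros f g finf ginf a b Hf Hg. exists (fun n s => a * f n s + b * g n s), (fun s => a * finf s + b * ginf s).
    split. apply inF_lin; auto. intros t _. apply (xf_lin f g finf ginf); auto.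
Qed.
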